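(* Let $U\subset\mathbb{R}^{n\times n}$ be a compact set of matrices. Then every matrix $A\in U$ is stable if and only if there exists an $n\times n$ SOS matrix $P:\mathbb{R}^{n\times n}\to\mathbb{S}^{n\times n}$ such that $P(A)\succ0$ for all $A\in U$ and $P(A)-A^TP(A)A\succ0$ for all $A\in U$.
   Context: A matrix is stable if its spectral radius (maximum modulus of its eigenvalues) is less than one. A polynomial matrix $P$ (symmetric matrix with polynomial entries in the $n^2$ entries of $A$) is an SOS matrix if the scalar polynomial $y^TP(A)y$ in the variables $(A,y)$ is a sum of squares of polynomials. $\succ0$ denotes positive definiteness. *)

(* Defs.v *)
From HB Require Import structures.
From mathcomp Require Import all_boot all_order all_algebra.
From mathcomp Require Import mpoly.
From mathcomp Require Import all_classical all_reals topology normedtype.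
From mathcomp.real_closed Require Import complex.
Import numFieldNormedType.Exports.

Set Implicit Arguments.
Unset Strict Implicit.
Unset Printing Implicit Defensive.

Import Order.TTheory GRing.Theory Num.Theory.
Local Open Scope ring_scope.

Section Defs.
Variable R : realType.

Definition stable (n : nat) (A : 'M[R]_n) : Prop :=
  forall z : R[i], eigenvalue (map_mx (fun x : R => (x%:C)%C) A) z -> `|z| < 1.

Definition posdef (n : nat) (M : 'M[R]_n) : Prop :=
  forall x : 'cV[R]_n, x != 0 -> 0 < (x^T *m M *m x) 0 0.

(* Polynomial matrices: entries are polynomials in the n^2 entries of A;
   the entry A i j corresponds to the variable 'X_(mxvec_index i j). *)
Definition eval_pmx (n : nat) (P : 'M[{mpoly R[n * n]}]_n) (A : 'M[R]_n)
  : 'M[R]_n :=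
  map_mx (fun p : {mpoly R[n * n]} => p.@[fun k => mxvec A 0 k]) P.

Definition is_sos (k : nat) (q : {mpoly R[k]}) : Prop :=
  exists s : seq {mpoly R[k]}, q = \sum_(f <- s) f ^+ 2.

(* the scalar polynomial y^T P(A) y in the n*n + n variables (A, y) *)
Definition lift_A (n : nat) (p : {mpoly R[n * n]}) : {mpoly R[n * n + n]} :=
  comp_mpoly [tuple 'X_(lshift n k) | k < n * n] p.

Definition quad_form_poly (n : nat) (P : 'M[{mpoly R[n * n]}]_n)
  : {mpoly R[n * n + n]} :=
  \sum_(i < n) \sum_(j < n)
     'X_(rshift (n * n) i) * lift_A (P i j) * 'X_(rshift (n * n) j).

Definition sos_matrix (n : nat) (P : 'M[{mpoly R[n * n]}]_n) : Prop :=
  P^T = P /\ is_sos (quad_form_poly P).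

End Defs.

(* Main.v *)
Require Import Defs.
From HB Require Import structures.
From mathcomp Require Import all_boot all_order all_algebra.
From mathcomp Require Import mpoly.
From mathcomp Require Import all_classical all_reals topology normedtype.
From mathcomp.real_closed Require Import complex.
From mathcomp Require Import sequences.
From mathcomp Require Import ring lra.
Import numFieldNormedType.Exports.
Import Order.TTheory GRing.Theory Num.Theory.
Set Implicit Arguments. Unset Strict Implicit. Unset Printing Implicit Defensive.
Local Open Scope ring_scope.
Section Alg.
Variable F : realFieldType.

Lemma CS k (a b : 'I_k -> F) :
  (\sum_j a j * b j) ^+ 2 <= (\sum_j a j ^+ 2) * (\sum_j b j ^+ 2).
Proof.
have H : 0 <= \sum_j \sum_l (a j * b l - a l * b j) ^+ 2.
  by apply: sumr_ge0 => j _; apply: sumr_ge0 => l _; apply: sqr_ge0.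
have E : \sum_j \sum_l (a j * b l - a l * b j) ^+ 2 =
  \sum_j \sum_l (a j ^+ 2 * b l ^+ 2 - 2 * ((a j * b j) * (a l * b l)))
  + \sum_j \sum_l (a l ^+ 2 * b j ^+ 2).
  rewrite -big_split /=; apply: eq_bigr => j _.
  rewrite -big_split /=; apply: eq_bigr => l _; ring.
rewrite [X in _ = _ + X]exchange_big /= in E.
have E2 : \sum_j \sum_l (a j ^+ 2 * b l ^+ 2 - 2 * ((a j * b j) * (a l * b l)))
   = (\sum_j a j ^+ 2) * (\sum_j b j ^+ 2) - 2 * (\sum_j a j * b j) ^+ 2.
  rewrite expr2 !big_distrlr /= mulr_sumr -sumrB; apply: eq_bigr => j _.
  rewrite mulr_sumr -sumrB; apply: eq_bigr => l _; ring.
have E3 : \sum_j \sum_l a j ^+ 2 * b l ^+ 2 = (\sum_j a j ^+ 2) * (\sum_j b j ^+ 2).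
  by rewrite big_distrlr.
rewrite E E2 E3 in H.
lra.
Qed.

Definition Fn p q (M : 'M[F]_(p, q)) := \sum_i \sum_j M i j ^+ 2.

Lemma Fn_ge0 p q (M : 'M[F]_(p, q)) : 0 <= Fn M.
Proof. by apply: sumr_ge0 => i _; apply: sumr_ge0 => j _; apply: sqr_ge0. Qed.

Lemma Fn_mul p q r (M : 'M[F]_(p, q)) (N : 'M[F]_(q, r)) :
  Fn (M *m N) <= Fn M * Fn N.
Proof.
rewrite /Fn.
have -> : \sum_j \sum_l N j l ^+ 2 = \sum_l \sum_j N j l ^+ 2 by rewrite exchange_big.
rewrite big_distrlr /=.
apply: ler_sum => i _; apply: ler_sum => l _.
rewrite mxE; exact: CS.
Qed.

Lemma Fn_pow m (M : 'M[F]_m.+1) k : Fn (M ^+ k.+1) <= Fn M ^+ k.+1.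
Proof.
elim: k => [|k IH]; first by rewrite !expr1.
rewrite exprS [X in _ <= X]exprS -mulmxE.
apply: (le_trans (Fn_mul _ _)).
apply: ler_wpM2l; first exact: Fn_ge0.
exact: IH.
Qed.

Lemma Fn_eq0 p q (M : 'M[F]_(p, q)) : (Fn M == 0) = (M == 0).
Proof.
apply/idP/idP; last by move/eqP->; rewrite /Fn big1 // => i _; rewrite big1 // => j _; rewrite mxE expr0n.
move=> /eqP H; apply/eqP/matrixP => i j; rewrite mxE.
have : M i j ^+ 2 <= Fn M.
  rewrite /Fn (bigD1 i) //= (bigD1 j) //=.
  rewrite -addrA lerDl; apply: addr_ge0.
    by apply: sumr_ge0 => l _; apply: sqr_ge0.
  by apply: sumr_ge0 => i' _; apply: sumr_ge0 => l _; apply: sqr_ge0.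
rewrite H => h; apply/eqP; rewrite -sqrf_eq0 eq_le h sqr_ge0.
by [].
Qed.

End Alg.
Lemma zmod_sw (V : zmodType) (a b c d : V) : a - b - (c - d) = a - c - (b - d).
Proof. by rewrite !opprB !addrA -!(addrAC _ d) addrAC. Qed.

Section Pow.
Variable F : numFieldType.

Lemma le_sum_entry p q (X : 'M[F]_(p, q)) i j :
  `|X i j| <= \sum_i' \sum_j' `|X i' j'|.
Proof.
rewrite (bigD1 i) //= (bigD1 j) //= -addrA lerDl; apply: addr_ge0.
  by apply: sumr_ge0 => l _.
by apply: sumr_ge0 => i' _; apply: sumr_ge0.
Qed.

Lemma pow_bound m (B : 'M[F]_m.+1) (r : F) (s : seq F) :
  0 < r -> (forall z, z \in s -> `|z| < r) ->
  forall X : 'M[F]_m.+1, (\prod_(z <- s) (B - z%:M)) * X = 0 ->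
  exists C, 0 <= C /\ forall k i j, `|(B ^+ k * X) i j| <= C * r ^+ k.
Proof.
move=> r0; elim: s => [|z s IH] Hs X.
  rewrite big_nil mul1r => ->; exists 0; split => // k i j.
  by rewrite mulr0 mxE normr0 mul0r.
rewrite big_cons => HX.
have Hz : `|z| < r by apply: Hs; rewrite inE eqxx.
have [C1 [C10 HC1]] : exists C, 0 <= C /\ forall k i j,
    `|(B ^+ k * ((B - z%:M) * X)) i j| <= C * r ^+ k.
  apply: IH; first by move=> w ws; apply: Hs; rewrite inE ws orbT.
  rewrite mulrA -HX; congr (_ * _).
  apply/esym/commr_prod => w _.
  rewrite /GRing.comm !mulrBl !mulrBr.
  have e1 : B * w%:M = w%:M * B by rewrite -!mulmxE scalar_mxC.
  have e2 : B * z%:M = z%:M * B by rewrite -!mulmxE scalar_mxC.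
  have e3 : z%:M * w%:M = w%:M * z%:M :> 'M_m.+1 by rewrite -!mulmxE scalar_mxC.
  rewrite e1 e2 e3; exact: zmod_sw.
set c := \sum_i' \sum_j' `|X i' j'|.
have c0 : 0 <= c by apply: sumr_ge0 => i _; apply: sumr_ge0.
have rz : 0 < r - `|z| by rewrite subr_gt0.
exists (c + C1 / (r - `|z|)); split.
  by apply: addr_ge0 => //; apply: divr_ge0 => //; apply: ltW.
elim => [|k IHk] i j.
  rewrite expr0 mul1r mulr1; apply: le_trans (le_sum_entry X i j) _.
  by rewrite lerDl; apply: divr_ge0 => //; apply: ltW.
have -> : B ^+ k.+1 * X = z *: (B ^+ k * X) + B ^+ k * ((B - z%:M) * X).
  rewrite [in RHS]mulrBl [in RHS]mulrBr -!mulmxE mul_scalar_mx -scalemxAr.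
  by rewrite addrC subrK exprSr mulmxA.
rewrite mxE exprS.
apply: (le_trans (ler_normD _ _)).
rewrite mxE normrM.
apply: le_trans (lerD (ler_wpM2l (normr_ge0 z) (IHk i j)) (HC1 k i j)) _.
set D := c + C1 / (r - `|z|).
have -> : D * (r * r ^+ k) = (D * r) * r ^+ k by rewrite mulrA.
rewrite mulrA -mulrDl; apply: ler_wpM2r; first by apply: exprn_ge0; apply: ltW.
have -> : D * r = `|z| * D + D * (r - `|z|) by rewrite mulrBr; rewrite [`|z| * D]mulrC addrC subrK.
rewrite lerD2l /D mulrDl divfK; last by rewrite gt_eqF.
by rewrite lerDr; apply: mulr_ge0 => //; apply: ltW.
Qed.

End Pow.
Section Cplx.
Variable R : realType.
Local Open Scope complex_scope.

Lemma normC_real (x : R) : `|x%:C| = `|x|%:C.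
Proof. by rewrite normc_def /= expr0n /= addr0 sqrtr_sqr. Qed.

Lemma choose_r (s : seq R[i]) : (forall z, z \in s -> `|z| < 1) ->
  exists r : R, [/\ 0 < r, r < 1 & forall z, z \in s -> `|z| < r%:C].
Proof.
elim: s => [|z s IH] Hs.
  by exists (1/2); split => //; lra.
have [r [r0 r1 Hr]] : exists r : R, [/\ 0 < r, r < 1 & forall z, z \in s -> `|z| < r%:C].
  by apply: IH => w ws; apply: Hs; rewrite inE ws orbT.
have := Hs z (mem_head _ _); rewrite normc_def.
set t := Num.sqrt _ => ht.
have t1 : t < 1 by rewrite -(@ltcR R) .
have t0 : 0 <= t by apply: sqrtr_ge0.
exists (Num.max r ((t + 1) / 2)); split.
- by rewrite lt_max r0.
- by rewrite gt_max r1 /=; lra.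
move=> w; rewrite inE => /orP [/eqP -> | ws].
  rewrite normc_def -/t ltcR lt_max; apply/orP; right; lra.
apply: (lt_le_trans (Hr w ws)); rewrite lecR le_max lexx //.
Qed.


Lemma stable_pow m (A : 'M[R]_m.+1) : stable A ->
  exists k, Fn (A ^+ k.+1) < 1.
Proof.
move=> HA.
pose Ac := map_mx (fun x : R => (x%:C)%C) A.
have [s Hs] := closed_field_poly_normal (char_poly Ac).
rewrite (monicP (char_poly_monic Ac)) scale1r in Hs.
have Hz : forall z, z \in s -> `|z| < 1.
  move=> z zs; apply: HA; rewrite eigenvalue_root_char Hs.
  by rewrite root_prod_XsubC.
have [r [r0 r1 Hr]] := choose_r Hz.
have H0 : \prod_(z <- s) (Ac - z%:M) * 1 = 0.
  rewrite mulr1 -(Cayley_Hamilton Ac) Hs rmorph_prod; apply: eq_bigr => z _.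
  by rewrite rmorphB /= horner_mx_X horner_mx_C.
have r0' : 0 < r%:C by rewrite ltcR.
have [C [C0 HC]] := pow_bound r0' Hr H0.
have [c Cc] : exists c : R, C = c%:C.
  exists (@complex.Re R C); move: (ger0_Im C0); case: C {HC C0} => a b /= ->; by [].
have c0 : 0 <= c by rewrite -(@lecR R) -Cc.
have HA' : forall k i j, `|(A ^+ k) i j| <= c * r ^+ k.
  move=> k i j; have := HC k i j.
  rewrite mulr1 /Ac -rmorphXn mxE Cc normC_real -rmorphXn -rmorphM /=.
  by rewrite lecR.
pose N : R := (m.+1)%:R.
have N1 : 1 <= N by rewrite /N ler1n.
pose eps := ((c + 1) * N)^-1.
have eps0 : 0 < eps by rewrite invr_gt0; apply: mulr_gt0; lra.
have rr : `|r| < 1 by rewrite ger0_norm // ltW.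
have := cvgr_lt 0 (cvg_expr rr) eps eps0.
case=> k0 _ Hk0.
exists k0; have := Hk0 k0.+1 (leqnSn _) => /= hk.
set e := r ^+ k0.+1 in hk *.
have e0 : 0 <= e by apply: exprn_ge0; apply: ltW.
have ecN : e * ((c + 1) * N) < 1.
  have cN : 0 < (c + 1) * N by apply: mulr_gt0; lra.
  by rewrite -ltr_pdivlMr // mul1r.
apply: (@le_lt_trans _ _ (\sum_(i < m.+1) \sum_(j < m.+1) (c * e) ^+ 2)).
  apply: ler_sum => i _; apply: ler_sum => j _.
  have := HA' k0.+1 i j; rewrite -/e => h.
  have := h; rewrite ler_norml => /andP [h1 h2]; nra.
rewrite !sumr_const !card_ord -mulr_natr -mulrnAr -mulr_natr -/N -mulrA.
have y0 : 0 <= c * e * N by apply: mulr_ge0; [apply: mulr_ge0|lra].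
have eN : 0 <= e * N by apply: mulr_ge0 => //; lra.
have y1 : c * e * N < 1 by nra.
have -> : c * e * (c * e * N * N) = (c * e * N) * (c * e * N) by ring.
nra.
Qed.

Lemma cont_sum (T : topologicalType) (I : Type) (r : seq I) (f : I -> T -> R) :
  (forall i, continuous (f i)) -> continuous (fun x => \sum_(i <- r) f i x).
Proof.
move=> Hf; elim: r => [|i r IH].
  under eq_fun do rewrite big_nil; exact: cst_continuous.
under eq_fun do rewrite big_cons.
move=> x; apply: cvgD; [exact: Hf | exact: IH].
Qed.

Lemma cont_mul (T : topologicalType) (f g : T -> R) :
  continuous f -> continuous g -> continuous (fun x => f x * g x).
Proof. by move=> Hf Hg x; apply: cvgM; [exact: Hf | exact: Hg]. Qed.

Lemma cont_entry p q (i : 'I_p) (j : 'I_q) :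
  continuous (fun B : 'M[R]_(p, q) => B i j).
Proof.
move=> u A /nbhs_ballP[e /= e0 eA].
apply/nbhs_ballP; exists e => //= v [_ uv]; apply: eA.
exact: uv.
Qed.

Lemma cont_pow_entry m k (i j : 'I_m.+1) :
  continuous (fun B : 'M[R]_m.+1 => (B ^+ k) i j).
Proof.
elim: k i j => [|k IH] i j.
  under eq_fun do rewrite expr0; exact: cst_continuous.
under eq_fun do rewrite exprS -mulmxE mxE.
apply: cont_sum => l; apply: cont_mul; [exact: cont_entry | exact: IH].
Qed.

Lemma cont_Fpow m k : continuous (fun B : 'M[R]_m.+1 => Fn (B ^+ k)).
Proof.
apply: cont_sum => i; apply: cont_sum => j.
under eq_fun do rewrite expr2.
by apply: cont_mul; apply: cont_pow_entry.
Qed.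

Local Open Scope classical_set_scope.
Lemma uniform_pow m (U : set 'M[R]_m.+1) : compact U ->
  (forall A, U A -> stable A) -> exists N, forall A, U A -> Fn (A ^+ N.+1) < 1.
Proof.
rewrite compact_cover => cU HU.
pose O k := [set B : 'M[R]_m.+1 | Fn (B ^+ k.+1) < 1].
have oO : forall k, [set: nat] k -> open (O k).
  move=> k _; apply: (@open_comp _ _ (fun B : 'M[R]_m.+1 => Fn (B ^+ k.+1)) [set x | x < 1]).
    by move=> x _; apply: cont_Fpow.
  exact: open_lt.
have cov : U `<=` cover [set: nat] O.
  move=> A UA; have [k Hk] := stable_pow (HU A UA).
  by exists k.
have [D' _ HD'] := cU nat [set: nat] O oO cov.
pose Nn := (\prod_(k <- finmap.enum_fset D') k.+1)%N.
have Nn0 : (0 < Nn)%N by apply: prodn_gt0.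
exists Nn.-1; move=> A UA; rewrite prednK //.
have [k kD Hk] := HD' A UA.
have kD' : k \in finmap.enum_fset D' by [] .
rewrite /Nn (big_rem k kD') /=.
set q := (\prod_(_ <- _) _)%N.
have q0 : (0 < q)%N by apply: prodn_gt0.
rewrite exprM -(prednK q0).
apply: le_lt_trans (Fn_pow _ _) _.
rewrite exprn_ilt1 //; exact: Fn_ge0.
Qed.
End Cplx.
Section Back.
Variable R : realType.
Local Open Scope complex_scope.
Lemma ReD (x y : R[i]) : complex.Re (x + y) = complex.Re x + complex.Re y.
Proof. by case: x; case: y. Qed.
Lemma ImD (x y : R[i]) : complex.Im (x + y) = complex.Im x + complex.Im y.
Proof. by case: x; case: y. Qed.
Lemma ReM (x y : R[i]) : complex.Re (x * y) = complex.Re x * complex.Re y - complex.Im x * complex.Im y.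
Proof. by case: x => a b; case: y => c d. Qed.
Lemma ImM (x y : R[i]) : complex.Im (x * y) = complex.Re x * complex.Im y + complex.Im x * complex.Re y.
Proof. by case: x => a b; case: y => c d /=. Qed.
Lemma Re_sum (I : Type) (r : seq I) (f : I -> R[i]) :
  complex.Re (\sum_(i <- r) f i) = \sum_(i <- r) complex.Re (f i).
Proof. by elim: r => [|i r IH]; rewrite ?big_nil ?big_cons // ReD IH. Qed.
Lemma Im_sum (I : Type) (r : seq I) (f : I -> R[i]) :
  complex.Im (\sum_(i <- r) f i) = \sum_(i <- r) complex.Im (f i).
Proof. by elim: r => [|i r IH]; rewrite ?big_nil ?big_cons // ImD IH. Qed.

Lemma char_poly_tr (F : comNzRingType) n (M : 'M[F]_n) : char_poly M^T = char_poly M.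
Proof.
rewrite /char_poly -det_tr; congr (\det _).
by rewrite /char_poly_mx linearB /= tr_scalar_mx map_trmx trmxK.
Qed.

Variable n : nat.
Variable Q : 'M[R]_n.
Definition bil (u v : 'cV[R]_n) := (u^T *m Q *m v) 0 0.
Lemma bilDl u v w : bil (u + v) w = bil u w + bil v w.
Proof. by rewrite /bil linearD /= !mulmxDl mxE. Qed.
Lemma bilZl a u w : bil (a *: u) w = a * bil u w.
Proof. by rewrite /bil linearZ /= -!scalemxAl mxE. Qed.
Lemma bilDr u v w : bil w (u + v) = bil w u + bil w v.
Proof. by rewrite /bil !mulmxDr mxE. Qed.
Lemma bilZr a u w : bil w (a *: u) = a * bil w u.
Proof. by rewrite /bil -!scalemxAr mxE. Qed.
Lemma bil_sym u v : Q^T = Q -> bil u v = bil v u.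
Proof.
move=> HQ; rewrite /bil.
have -> : (u^T *m Q *m v) 0 0 = ((u^T *m Q *m v)^T) 0 0 by rewrite [RHS]mxE.
by rewrite !trmx_mul trmxK HQ mulmxA.
Qed.
Lemma bil0 u : bil 0 u = 0.
Proof. by rewrite /bil linear0 !mul0mx mxE. Qed.
End Back.
Section Back2.
Variable R : realType.
Local Open Scope complex_scope.

Lemma stable_of_lyap n (A Q : 'M[R]_n) : Q^T = Q -> posdef Q ->
  posdef (Q - A^T *m Q *m A) -> stable A.
Proof.
move=> HQ PQ PL z.
rewrite eigenvalue_root_char -char_poly_tr -eigenvalue_root_char.
move=> /eigenvalueP [v Hv v0].
set Ac := map_mx _ A in Hv.
pose w := v^T.
have Hw : Ac *m w = z *: w.
  by have := congr1 trmx Hv; rewrite trmx_mul trmxK linearZ.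
pose a := complex.Re z; pose b := complex.Im z.
pose x := map_mx (@complex.Re R) w; pose y := map_mx (@complex.Im R) w.
have Ax : A *m x = a *: x + (- b) *: y.
  apply/matrixP => i j; rewrite !mxE.
  have := congr1 (fun M : 'M[R[i]]_(n,1) => complex.Re (M i j)) Hw; rewrite /= !mxE Re_sum ReM.
  rewrite mulNr -/a -/b => H; rewrite -H.
  apply: eq_bigr => l _; rewrite !mxE ReM /=.
  by rewrite mul0r subr0.
have Ay : A *m y = b *: x + a *: y.
  apply/matrixP => i j; rewrite !mxE.
  have := congr1 (fun M : 'M[R[i]]_(n,1) => complex.Im (M i j)) Hw; rewrite /= !mxE Im_sum ImM.
  rewrite -/a -/b => H; rewrite addrC -H.
  apply: eq_bigr => l _; rewrite !mxE ImM /=.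
  by rewrite mul0r addr0.
have qL : forall u, (u^T *m (Q - A^T *m Q *m A) *m u) 0 0
    = bil Q u u - bil Q (A *m u) (A *m u).
  move=> u; rewrite /bil mulmxBr mulmxBl.
  rewrite [LHS]mxE [X in _ + X = _]mxE; congr (_ - _).
  by rewrite trmx_mul !mulmxA.
have qpos : forall u, 0 <= bil Q u u.
  move=> u; have [->|u0] := eqVneq u 0; first by rewrite bil0.
  exact/ltW/PQ.
have qLpos : forall u, 0 <= bil Q u u - bil Q (A *m u) (A *m u).
  move=> u; have [->|u0] := eqVneq u 0; first by rewrite mulmx0 bil0 subr0.
  by rewrite -qL; apply/ltW/PL.
have E : bil Q (A *m x) (A *m x) + bil Q (A *m y) (A *m y) =
    (a ^+ 2 + b ^+ 2) * (bil Q x x + bil Q y y).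
  rewrite Ax Ay !(bilDl, bilDr, bilZl, bilZr) (bil_sym x y HQ); ring.
have xy0 : (x != 0) || (y != 0).
  apply: contraR v0; rewrite negb_or !negbK => /andP [/eqP x0 /eqP y0].
  apply/eqP/matrixP => i j.
  have := congr1 (fun M : 'M[R]_(n,1) => M j i) x0.
  have := congr1 (fun M : 'M[R]_(n,1) => M j i) y0.
  rewrite !mxE; case: (v i j) => p q /= -> ->; by [].
have [S0 T0] : 0 < bil Q x x + bil Q y y /\
  0 < (bil Q x x - bil Q (A *m x) (A *m x)) + (bil Q y y - bil Q (A *m y) (A *m y)).
  case/orP: xy0 => [x0|y0].
    split; first by apply: ltr_wpDr => //; apply: PQ.
    by apply: ltr_wpDr => //; rewrite -qL; apply: PL.
  split; first by apply: ltr_wpDl => //; apply: PQ.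
  by apply: ltr_wpDl => //; rewrite -qL; apply: PL.
have ab1 : a ^+ 2 + b ^+ 2 < 1.
  have : 0 < (1 - (a ^+ 2 + b ^+ 2)) * (bil Q x x + bil Q y y).
    by rewrite mulrBl mul1r -E; move: T0; set p := bil Q x x; set q := bil Q y y; lra.
  by rewrite pmulr_lgt0 // subr_gt0.
rewrite normc_def.
have -> : (1 : R[i]) = 1%:C by [].
rewrite ltcR -sqrtr1 ltr_sqrt //.
Qed.
End Back2.
Section Poly.
Variable R : realType.

Definition is_sos' k (q : {mpoly R[k]}) := is_sos q.

Lemma sos0 k : is_sos (0 : {mpoly R[k]}).
Proof. by exists [::]; rewrite big_nil. Qed.
Lemma sosD k (p q : {mpoly R[k]}) : is_sos p -> is_sos q -> is_sos (p + q).
Proof. by move=> [s ->] [t ->]; exists (s ++ t); rewrite big_cat. Qed.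
Lemma sos_sq k (p : {mpoly R[k]}) : is_sos (p ^+ 2).
Proof. by exists [:: p]; rewrite big_seq1. Qed.
Lemma sos_sum k (I : Type) (r : seq I) (f : I -> {mpoly R[k]}) :
  (forall i, is_sos (f i)) -> is_sos (\sum_(i <- r) f i).
Proof.
move=> H; elim: r => [|i r IH]; first by rewrite big_nil; apply: sos0.
by rewrite big_cons; apply: sosD.
Qed.

Variable m : nat.
Local Notation n := m.+1.
Local Notation PR := {mpoly R[n * n]}.
Local Notation PR2 := {mpoly R[n * n + n]}.

Definition Xm : 'M[PR]_n := \matrix_(i, j) 'X_(mxvec_index i j).
Definition Pk N : 'M[PR]_n := \sum_(k < N.+1) (Xm ^+ k)^T *m Xm ^+ k.

Definition Yc : 'cV[PR2]_n := \col_i 'X_(rshift (n * n) i).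

Lemma quad_mx (M : 'M[PR2]_n) :
  (Yc^T *m M *m Yc) 0 0 = \sum_i \sum_j 'X_(rshift (n * n) i) * M i j * 'X_(rshift (n * n) j).
Proof.
rewrite mxE exchange_big /=; apply: eq_bigr => j _.
rewrite mxE mulr_suml; apply: eq_bigr => i _.
by rewrite !mxE.
Qed.

Lemma sos_BtB p (B : 'M[PR2]_(p, n)) : is_sos ((Yc^T *m (B^T *m B) *m Yc) 0 0).
Proof.
rewrite mulmxA -mulmxA -trmx_mul mxE; apply: sos_sum => l.
by rewrite mxE -expr2; apply: sos_sq.
Qed.

Lemma quad_form_Pk N : quad_form_poly (Pk N) =
  (Yc^T *m map_mx (@lift_A R n) (Pk N) *m Yc) 0 0.
Proof.
by rewrite quad_mx /quad_form_poly; apply: eq_bigr => i _; apply: eq_bigr => j _; rewrite mxE.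
Qed.

Lemma sos_Pk N : sos_matrix (Pk N).
Proof.
split.
  rewrite /Pk linear_sum /=; apply: eq_bigr => k _.
  by rewrite trmx_mul trmxK.
rewrite quad_form_Pk /Pk.
have -> : map_mx (@lift_A R n) (\sum_(k < N.+1) (Xm ^+ k)^T *m Xm ^+ k) =
   \sum_(k < N.+1) (map_mx (@lift_A R n) Xm ^+ k)^T *m (map_mx (@lift_A R n) Xm ^+ k).
  rewrite /lift_A map_mx_sum; apply: eq_bigr => k _.
  by rewrite map_mxM -map_trmx rmorphXn.
rewrite mulmx_sumr mulmx_suml summxE; apply: sos_sum => k.
exact: sos_BtB.
Qed.

Lemma eval_Xm (A : 'M[R]_n) : eval_pmx Xm A = A.
Proof. by apply/matrixP => i j; rewrite !mxE mevalXU mxvecE. Qed.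

Lemma eval_Pk N (A : 'M[R]_n) :
  eval_pmx (Pk N) A = \sum_(k < N.+1) (A ^+ k)^T *m A ^+ k.
Proof.
rewrite /eval_pmx /Pk map_mx_sum; apply: eq_bigr => k _.
rewrite map_mxM -map_trmx rmorphXn.
by have := eval_Xm A; rewrite /eval_pmx => E; rewrite -[in RHS]E.
Qed.

End Poly.

Lemma quad_BtB (R : realType) n p (B : 'M[R]_(p, n)) (x : 'cV[R]_n) :
  (x^T *m (B^T *m B) *m x) 0 0 = Fn (B *m x).
Proof.
rewrite mulmxA -mulmxA -trmx_mul mxE /Fn; apply: eq_bigr => l _.
by rewrite big_ord1 mxE expr2.
Qed.

Lemma Fn_gt0 (R : realType) p q (M : 'M[R]_(p, q)) : M != 0 -> 0 < Fn M.
Proof. by move=> M0; rewrite lt_def Fn_eq0 M0 Fn_ge0. Qed.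

Lemma zmod_tel (V : zmodType) (a x b : V) : (a + x) - (x + b) = a - b.
Proof. by rewrite opprD addrA addrK. Qed.

Lemma posdef_Pk (R : realType) m N (A : 'M[R]_m.+1) : posdef (eval_pmx (@Pk R m N) A).
Proof.
move=> x x0; rewrite eval_Pk mulmx_sumr mulmx_suml summxE.
rewrite big_ord_recl /= quad_BtB expr0 mul1mx.
apply: ltr_wpDr; last exact: Fn_gt0.
by apply: sumr_ge0 => k _; rewrite quad_BtB Fn_ge0.
Qed.

Lemma posdef_Lyap (R : realType) m N (A : 'M[R]_m.+1) : Fn (A ^+ N.+1) < 1 ->
  posdef (eval_pmx (@Pk R m N) A - A^T *m eval_pmx (@Pk R m N) A *m A).
Proof.
move=> HN x x0; rewrite eval_Pk.
pose f k := (A ^+ k)^T *m A ^+ k.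
have -> : A^T *m (\sum_(k < N.+1) (A ^+ k)^T *m A ^+ k) *m A = \sum_(k < N.+1) f k.+1.
  rewrite mulmx_sumr mulmx_suml; apply: eq_bigr => k _.
  by rewrite /f exprSr -mulmxE trmx_mul !mulmxA.
have eS : \sum_(k < N.+1) (A ^+ k)^T *m A ^+ k = f 0%N + \sum_(i < N) f i.+1.
  by rewrite big_ord_recl.
have eT : \sum_(k < N.+1) f k.+1 = \sum_(i < N) f i.+1 + f N.+1.
  by rewrite big_ord_recr.
rewrite eS eT zmod_tel.
rewrite mulmxBr mulmxBl [X in 0 < X]mxE [X in _ + X]mxE /f !quad_BtB expr0 mul1mx.
have := Fn_mul (A ^+ N.+1) x; have := Fn_gt0 x0; have := Fn_ge0 (A ^+ N.+1 *m x).
set a := Fn x; set c := Fn (A ^+ N.+1); set d := Fn _.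
move=> d0 a0 h.
have : 0 < a * (1 - c) by apply: mulr_gt0 => //; rewrite subr_gt0.
lra.
Qed.

Theorem lemma22 (R : realType) (n : nat) (U : set 'M[R]_n) :
  compact U ->
  ((forall A : 'M[R]_n, U A -> stable A) <->
   exists P : 'M[{mpoly R[n * n]}]_n,
     [/\ sos_matrix P,
         forall A : 'M[R]_n, U A -> posdef (eval_pmx P A)
       & forall A : 'M[R]_n, U A ->
           posdef (eval_pmx P A - A^T *m eval_pmx P A *m A)]).
Proof.
move=> cU; split; last first.
  move=> [P [[HPs _] HP1 HP2]] A UA.
  apply: (stable_of_lyap _ (HP1 A UA) (HP2 A UA)).
  by rewrite /eval_pmx map_trmx HPs.
case: n U cU => [|m] U cU HU.
  exists 0; split.
  - split; first by rewrite linear0.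
    by rewrite /quad_form_poly big_ord0; apply: sos0.
  - by move=> A _ x; rewrite (flatmx0 x) eqxx.
  - by move=> A _ x; rewrite (flatmx0 x) eqxx.
have [N HN] := uniform_pow cU HU.
exists (@Pk R m N); split.
- exact: sos_Pk.
- by move=> A _; apply: posdef_Pk.
- by move=> A UA; apply: posdef_Lyap; apply: HN.
Qed.
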